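(* Let $G$ be a connected graph with vertex set $\{u_1,\dots,u_n\}$, $n\ge2$, with non-singleton true twin equivalence classes $U_1,\dots,U_k$, and let $\mathcal{H}=\{H_1,\dots,H_n\}$ be a family of non-empty graphs (each having at least one edge). Then $$\dim_l(G\circ\mathcal{H})=\sum_{i=1}^n\operatorname{adim}_l(H_i)+\sum_{j:\,I\cap U_j\ne\emptyset}(|I\cap U_j|-1),$$ where $I=\{u_i: H_i\in\mathcal{G}\}$.
   Context: All graphs are finite and simple. $d_G$ is shortest-path distance ($+\infty$ between components), $d_{G,2}=\min\{d_G,2\}$; $s$ distinguishes $x,y$ w.r.t. $d$ if $d(s,x)\ne d(s,y)$. $\dim_l(G)$: minimum size of $S\subseteq V(G)$ such that any two adjacent vertices are distinguished w.r.t. $d_G$ by some vertex of $S$. $\operatorname{adim}_l(H)$: minimum size of $S\subseteq V(H)$ such that any two adjacent vertices are distinguished w.r.t. $d_{H,2}$ by some vertex of $S$; minimum such sets are local adjacency bases. $\mathcal{G}$: class of graphs $H$ such that every local adjacency basis $B$ of $H$ satisfies $B\subseteq N_H(v)$ for some $v\in V(H)$. True twins: $N[x]=N[y]$. Lexicographic product $G\circ\mathcal{H}$: vertex set $\bigcup_i\{u_i\}\times V(H_i)$, $(u_i,v)\sim(u_j,w)$ iff $u_iu_j\in E(G)$, or $i=j$ and $vw\in E(H_i)$. *)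

(* Defs.v *)
(* Finite simple graphs are given by a finType of vertices
   and a symmetric irreflexive boolean edge relation. *)
From mathcomp Require Import all_boot.
Set Implicit Arguments. Unset Strict Implicit. Unset Printing Implicit Defensive.

Section Graphs.
Variables (V : finType) (e : rel V).

Definition walkb (k : nat) (x y : V) : bool :=
  [exists p : k.-tuple V, path e x p && (last x p == y)].

(* shortest-path distance; None stands for +infinity (different components).
   In a graph on #|V| vertices every finite distance is < #|V|. *)
Definition dist (x y : V) : option nat :=
  let k := find (fun k => walkb k x y) (iota 0 #|V|) in
  if k < #|V| then Some k else None.

Definition dist2 (x y : V) : nat :=
  if dist x y is Some k then minn k 2 else 2.

Definition local_resolving {D : eqType} (d : V -> V -> D) (S : {set V}) : bool :=
  [forall x, forall y, e x y ==> [exists s in S, d s x != d s y]].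

(* minimum size of such a set (V itself is always one, so the search succeeds) *)
Definition min_local_resolving {D : eqType} (d : V -> V -> D) : nat :=
  find (fun k => [exists S : {set V}, local_resolving d S && (#|S| == k)])
       (iota 0 #|V|.+1).

Definition dim_l : nat := min_local_resolving dist.

Definition adim_l : nat := min_local_resolving dist2.

Definition local_adjacency_basis (B : {set V}) : bool :=
  local_resolving dist2 B && (#|B| == adim_l).

Definition open_nbhd (v : V) : {set V} := [set w | e v w].
Definition closed_nbhd (v : V) : {set V} := v |: open_nbhd v.

Definition in_classG : Prop :=
  forall B : {set V}, local_adjacency_basis B -> exists v : V, B \subset open_nbhd v.

Definition twin_class (x : V) : {set V} :=
  [set y | closed_nbhd y == closed_nbhd x].
Definition twin_classes : {set {set V}} := [set twin_class x | x in V].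
Definition nonsingleton_twin_classes : {set {set V}} :=
  [set U in twin_classes | 1 < #|U|].

Definition has_edge : Prop := exists x y : V, e x y.
Definition simple_graph : Prop := symmetric e /\ irreflexive e.
End Graphs.

Definition lex_rel (n : nat) (eG : rel 'I_n) (T : 'I_n -> finType)
  (E : forall i, rel (T i)) : rel {i : 'I_n & T i} :=
  fun x y => eG (tag x) (tag y) || ((tag x == tag y) && E (tag x) (tagged x) (tagged_as x y)).

(* Main.v *)
Set Warnings "-notation-overridden".
Require Import Defs.
From mathcomp Require Import all_boot.
Set Implicit Arguments. Unset Strict Implicit. Unset Printing Implicit Defensive.

Lemma find_first (f : nat -> bool) N k :
  k < N -> f k -> (forall j, j < k -> ~~ f j) -> find f (iota 0 N) = k.
Proof.
move=> kN fk hj.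
have -> : N = k + (N - k) by rewrite subnKC // ltnW.
rewrite iotaD find_cat.
have -> : has f (iota 0 k) = false.
  apply/hasP => -[j]; rewrite mem_iota add0n => /andP[_ jk]; by rewrite (negbTE (hj _ jk)).
rewrite size_iota add0n.
have -> : N - k = (N - k).-1.+1 by rewrite prednK // subn_gt0.
by rewrite /= fk addn0.
Qed.

Lemma find_iota_spec (f : nat -> bool) N :
  let k := find f (iota 0 N) in
  k <= N /\ (k < N -> f k) /\ (forall j, j < k -> ~~ f j).
Proof.
move=> k; split; first by rewrite /k -[X in _ <= X](size_iota 0 N) find_size.
split.
  move=> kN. have hs : has f (iota 0 N) by rewrite has_find size_iota.
  by have := nth_find 0 hs; rewrite nth_iota // add0n.
move=> j jk. have := before_find 0 jk.
have jN : j < N. apply: leq_trans jk _. by rewrite /k -[X in _ <= X](size_iota 0 N) find_size.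
by rewrite nth_iota // add0n => ->.
Qed.

Lemma find_iota_eq (f g : nat -> bool) N :
  (forall j, f j -> exists2 j', j' <= j & g j') ->
  (forall j, g j -> exists2 j', j' <= j & f j') ->
  find f (iota 0 N) = find g (iota 0 N).
Proof.
move=> hfg hgf.
have [a1 [a2 a3]] := find_iota_spec f N.
have [b1 [b2 b3]] := find_iota_spec g N.
set a := find f _ in a1 a2 a3 *; set b := find g _ in b1 b2 b3 *.
have H : forall (f g : nat -> bool) a b, a <= N -> (a < N -> f a) -> (forall j, j < a -> ~~ f j) ->
  b <= N -> (b < N -> g b) -> (forall j, j < b -> ~~ g j) ->
  (forall j, g j -> exists2 j', j' <= j & f j') -> a <= b.
  move=> f' g' a' b' ha1 ha2 ha3 hb1 hb2 hb3 h.
  case: (ltnP b' N) => bN; last by apply: leq_trans ha1 bN.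
  have [j' j'b fj'] := h _ (hb2 bN).
  rewrite leqNgt; apply/negP => ba. have := ha3 j' (leq_ltn_trans j'b ba). by rewrite fj'.
apply/eqP; rewrite eqn_leq; apply/andP; split.
  exact: (H f g a b).
exact: (H g f b a).
Qed.

Section G.
Variables (V : finType) (e : rel V).

Lemma walkbP k x y :
  reflect (exists p : seq V, [/\ size p = k, path e x p & last x p = y]) (walkb e k x y).
Proof.
apply: (iffP existsP).
  move=> [p /andP[hp /eqP hl]]; exists p; split => //; exact: size_tuple.
move=> [p [hs hp hl]]. have hs' : size p == k by apply/eqP.
by exists (Tuple hs'); rewrite /= hp hl eqxx.
Qed.

Lemma walkb0 x y : walkb e 0 x y = (x == y).
Proof.
apply/walkbP/eqP => [[p [hs _ <-]]|<-]; last by exists [::].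
by case: p hs.
Qed.

Lemma walkb1 x y : walkb e 1 x y = e x y.
Proof.
apply/walkbP/idP => [[p [hs hp hl]]|h]; last by exists [:: y]; rewrite /= h.
case: p hs hp hl => [|z [|]] //= _. by rewrite andbT => h <-.
Qed.

Lemma walkb2 x y z : e x z -> e z y -> walkb e 2 x y.
Proof. move=> h1 h2; apply/walkbP; exists [:: z; y]; by rewrite /= h1 h2. Qed.

Lemma dist_some k x y : k < #|V| -> walkb e k x y -> (forall j, j < k -> ~~ walkb e j x y) ->
  dist e x y = Some k.
Proof. move=> kN hk hj; by rewrite /dist (find_first kN hk hj) kN. Qed.

Lemma dist_someE k x y : dist e x y = Some k ->
  walkb e k x y /\ (forall j, j < k -> ~~ walkb e j x y).
Proof.
rewrite /dist. have [a1 [a2 a3]] := find_iota_spec (fun k => walkb e k x y) #|V|.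
case: ifP => // h [<-]. split; [exact: a2 | exact: a3].
Qed.

Lemma dist_refl x : dist e x x = Some 0.
Proof.
apply: dist_some => //; last by rewrite walkb0.
by apply/card_gt0P; exists x.
Qed.

Lemma dist_neq0 x y : x != y -> dist e x y != Some 0.
Proof. move=> ne; apply/eqP => /dist_someE [h _]; by rewrite walkb0 (negbTE ne) in h. Qed.

Lemma dist_neq1 x y : ~~ e x y -> dist e x y != Some 1.
Proof. move=> ne; apply/eqP => /dist_someE [h _]; by rewrite walkb1 (negbTE ne) in h. Qed.

Lemma card2 (x y : V) : x != y -> 1 < #|V|.
Proof. move=> ne; have := max_card [set x; y]; by rewrite cards2 ne. Qed.

Lemma card3 (x y z : V) : x != y -> x != z -> y != z -> 2 < #|V|.
Proof.
move=> n1 n2 n3; have := max_card (z |: [set x; y]).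
rewrite cardsU1 cards2 in_set2 n1 negb_or eq_sym n2 eq_sym n3. by [].
Qed.

Hypothesis irr : irreflexive e.
Hypothesis sym : symmetric e.

Lemma dist_edge x y : e x y -> dist e x y = Some 1.
Proof.
move=> h. have ne : x != y by apply: contraTneq h => ->; rewrite irr.
apply: dist_some; first exact: card2 ne. by rewrite walkb1.
by case => // _; rewrite walkb0.
Qed.

Lemma dist_two x y z : x != y -> ~~ e x y -> e x z -> e z y -> dist e x y = Some 2.
Proof.
move=> ne nxy h1 h2.
have nxz : x != z by apply: contraTneq h1 => ->; rewrite irr.
have nzy : y != z by apply: contraTneq h2 => ->; rewrite irr.
apply: dist_some; first exact: card3 ne nxz nzy.
  exact: walkb2 h1 h2.
by case => [|[|]] // _; rewrite ?walkb0 ?walkb1.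
Qed.

Lemma dist2E x y : dist2 e x y = if x == y then 0 else if e x y then 1 else 2.
Proof.
rewrite /dist2. case: eqP => [<-|/eqP ne]; first by rewrite dist_refl.
case: ifP => h; first by rewrite dist_edge.
have n0 := dist_neq0 ne. have n1 := dist_neq1 (negbT h).
case: (dist e x y) n0 n1 => // -[|[|k]] //.
Qed.

Lemma walk_module (C : pred V) s x y j :
  ~~ C s -> C x -> (forall z w, ~~ C z -> C w -> e z w -> e z y) ->
  walkb e j s x -> exists2 j', j' <= j & walkb e j' s y.
Proof.
move=> ns cx hmod /walkbP [p [hs hp hl]].
have hasC : has C p.
  case: (lastP p) hl hp => [/= Ex | q z]; first by move: cx; rewrite -Ex (negbTE ns).
  by rewrite last_rcons => ->; rewrite has_rcons cx.
set m := find C p.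
have mp : m < size p by rewrite /m -has_find.
set q := take m p.
have hq : size q = m by rewrite /q size_take mp.
have hd : drop m p = nth s p m :: drop m.+1 p by rewrite (drop_nth s mp).
have hpq : path e s (q ++ drop m p) by rewrite cat_take_drop.
rewrite cat_path hd /= in hpq. case/and3P: hpq => hpq hw _.
have nw : ~~ C (last s q).
  have : last s q \in s :: q by apply: mem_last.
  rewrite inE => /orP[/eqP Ew | wq]; first by rewrite Ew.
  have : ~~ has C q by rewrite /q has_take_leq ?ltnn // ltnW.
  by apply: contra => cw; apply/hasP; exists (last s q).
have cm : C (nth s p m) by apply: nth_find.
exists m.+1; first by rewrite -hs.
apply/walkbP; exists (rcons q y); split.
- by rewrite size_rcons hq.
- by rewrite rcons_path hpq (hmod _ _ nw cm hw).
- by rewrite last_rcons.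
Qed.

Lemma dist_module (C : pred V) s x y :
  ~~ C s -> C x -> C y -> (forall z w v, ~~ C z -> C w -> C v -> e z w -> e z v) ->
  dist e s x = dist e s y.
Proof.
move=> ns cx cy hm. rewrite /dist.
rewrite (@find_iota_eq (fun k => walkb e k s x) (fun k => walkb e k s y)) //.
  move=> j; apply: (walk_module ns cx) => z w nz cw; exact: hm.
move=> j; apply: (walk_module ns cy) => z w nz cw; exact: hm.
Qed.

Lemma resolving_sub {D : eqType} (d : V -> V -> D) (S S' : {set V}) :
  local_resolving e d S -> S \subset S' -> local_resolving e d S'.
Proof.
move=> /forallP h sub; apply/forallP => x; apply/forallP => y; apply/implyP => hxy.
have /existsP [s /andP [sS hs]] := implyP (forallP (h x) y) hxy.
apply/existsP; exists s; by rewrite (subsetP sub _ sS).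
Qed.

Lemma min_eq {D : eqType} (d : V -> V -> D) m :
  (exists S, local_resolving e d S /\ #|S| = m) ->
  (forall S, local_resolving e d S -> m <= #|S|) ->
  min_local_resolving e d = m.
Proof.
move=> [S [hS cS]] hl. apply: find_first.
- by rewrite ltnS -cS max_card.
- by apply/existsP; exists S; rewrite hS cS eqxx.
move=> j jm; apply/existsP => -[S' /andP[h /eqP c]].
by have := hl _ h; rewrite c leqNgt jm.
Qed.

Lemma min_spec {D : eqType} (d : V -> V -> D) :
  local_resolving e d setT ->
  (exists S, local_resolving e d S /\ #|S| = min_local_resolving e d) /\
  (forall S, local_resolving e d S -> min_local_resolving e d <= #|S|).
Proof.
move=> hT. rewrite /min_local_resolving.
have [a1 [a2 a3]] := find_iota_spec (fun k => [exists S : {set V}, local_resolving e d S && (#|S| == k)]) #|V|.+1.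
set k := find _ _ in a1 a2 a3 *.
have kN : k < #|V|.+1.
  rewrite ltnS leqNgt; apply/negP => lt.
  have := a3 #|V| lt => /= /negP; apply; apply/existsP; exists setT; by rewrite hT cardsT eqxx.
split.
  have := a2 kN; move=> /= /existsP [S /andP [h /eqP c]]. by exists S.
move=> S hS. rewrite leqNgt; apply/negP => lt.
have := a3 _ lt => /= /negP; apply; apply/existsP; exists S; by rewrite hS eqxx.
Qed.

Lemma dist2_resolvingT : local_resolving e (dist2 e) setT.
Proof.
apply/forallP => x; apply/forallP => y; apply/implyP => hxy.
apply/existsP; exists x; rewrite inE /= !dist2E eqxx hxy.
case: (eqVneq x y) => [exy|//]; by rewrite exy irr in hxy.
Qed.

End G.


Section Count.
Variables (n : nat) (eG : rel 'I_n).

Lemma tc_mem U i : U \in twin_classes eG -> (twin_class eG i == U) = (i \in U).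
Proof.
case/imsetP => x _ ->. rewrite inE. apply/eqP/eqP => [h|h].
  have : i \in twin_class eG i by rewrite inE.
  by rewrite h inE => /eqP.
by apply/setP => y; rewrite !inE h.
Qed.

Lemma twin_part (A : {set 'I_n}) : #|A| = \sum_(U in twin_classes eG) #|A :&: U|.
Proof.
rewrite -sum1_card (partition_big (twin_class eG) (mem (twin_classes eG))) /=; last first.
  move=> i _; exact: imset_f.
apply: eq_bigr => U hU. rewrite sum1dep_card. apply: eq_card => i.
by rewrite !inE tc_mem.
Qed.

Variable I : {set 'I_n}.
Definition pk (A : {set 'I_n}) := [pick k in A].
Definition Xs := [set i in I | pk (I :&: twin_class eG i) != Some i].

Lemma XU U : U \in twin_classes eG -> #|Xs :&: U| = #|I :&: U| - 1.
Proof.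
move=> hU.
have tw : forall i, i \in U -> twin_class eG i = U by move=> i iU; apply/eqP; rewrite tc_mem.
have -> : Xs :&: U = [set i in I :&: U | pk (I :&: U) != Some i].
  apply/setP => i; rewrite !inE. case: (boolP (i \in U)) => iU; last by rewrite !andbF.
  by rewrite tw // !andbT.
rewrite /pk. case: pickP => [r hr|h].
  have -> : [set i in I :&: U | Some r != Some i] = (I :&: U) :\ r.
    apply/setP => i; rewrite !inE (inj_eq (@Some_inj _)) eq_sym andbC; by case: (i != r).
  by rewrite [in RHS](cardsD1 r) hr add1n subn1.
have -> : I :&: U = set0 by apply/setP => i; move: (h i) => /= ->; by rewrite inE.
by rewrite cards0; apply/eqP; rewrite cards_eq0; apply/eqP/setP => i; rewrite !inE.
Qed.

Lemma sum_X : #|Xs| = \sum_(U in twin_classes eG) (#|I :&: U| - 1).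
Proof. rewrite (twin_part Xs); apply: eq_bigr => U hU; exact: XU. Qed.

Lemma rhs_eq : \sum_(U in nonsingleton_twin_classes eG | I :&: U != set0) (#|I :&: U| - 1) =
  \sum_(U in twin_classes eG) (#|I :&: U| - 1).
Proof.
rewrite big_mkcond [RHS]big_mkcond; apply: eq_bigr => U _.
rewrite /nonsingleton_twin_classes !inE.
case: (U \in twin_classes eG) => //=.
case: ltnP => hU /=; first by case: (eqVneq (I :&: U) set0) => [->|]; rewrite ?cards0.
case: (eqVneq (I :&: U) set0) => [->|_]; first by rewrite cards0.
have : #|I :&: U| <= 1 by apply: leq_trans hU; apply: subset_leq_card; apply: subsetIr.
by case: #|I :&: U| => [|[]].
Qed.

Lemma sum_nat_set (X : {set 'I_n}) : \sum_(i < n) (i \in X : nat) = #|X|.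
Proof. rewrite -sum1_card [RHS]big_mkcond /=; apply: eq_bigr => i _; by case: (i \in X). Qed.

End Count.


Unset Implicit Arguments.
Section Prod.
Variables (n : nat) (eG : rel 'I_n) (T : 'I_n -> finType) (E : forall i, rel (T i)).
Set Implicit Arguments.
Hypothesis eGirr : irreflexive eG.
Hypothesis eGsym : symmetric eG.
Hypothesis Eirr : forall i : 'I_n, irreflexive (E i).
Hypothesis Esym : forall i : 'I_n, symmetric (E i).
Hypothesis nbr : forall i : 'I_n, exists k, eG i k.
Hypothesis inh : forall i : 'I_n, exists a : T i, true.

Local Notation P := {i : 'I_n & T i}.
Local Notation eP := (lex_rel eG E).

Lemma Tagged_inj i (a b : T i) : Tagged T a = Tagged T b -> a = b.
Proof. move=> h; have := f_equal (tagged_as (Tagged T a)) h; by rewrite !tagged_asE. Qed.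

Lemma eP_same i (a b : T i) : eP (Tagged T a) (Tagged T b) = E i a b.
Proof. by rewrite /lex_rel /= eGirr eqxx tagged_asE. Qed.

Lemma eP_diff i j (a : T i) (b : T j) : i != j -> eP (Tagged T a) (Tagged T b) = eG i j.
Proof. by move=> ne; rewrite /lex_rel /= (negbTE ne) orbF. Qed.

Lemma eP_tag (x y : P) : tag x != tag y -> eP x y = eG (tag x) (tag y).
Proof. by case: x => i a; case: y => j b /= ne; rewrite eP_diff. Qed.

Lemma eP_irr : irreflexive eP.
Proof. case=> i a; by rewrite eP_same Eirr. Qed.

Lemma eP_sym : symmetric eP.
Proof.
case=> i a; case=> j b. case: (eqVneq i j) => [ij|ij].
  subst j; by rewrite !eP_same Esym.
by rewrite !eP_diff // eq_sym.
Qed.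

Lemma PD_same i (c a : T i) : dist eP (Tagged T c) (Tagged T a) = Some (dist2 (E i) c a).
Proof.
rewrite dist2E //. case: (eqVneq c a) => [<-|ne]; first by rewrite dist_refl.
case: ifP => h; first by rewrite (dist_edge eP_irr) ?eP_same.
have [k ik] := nbr i. have [t _] := inh k.
have ne' : i != k by apply: contraTneq ik => ->; rewrite eGirr.
apply: (@dist_two _ _ eP_irr _ _ (Tagged T t)).
- by apply: contra_neq ne => /Tagged_inj.
- by rewrite eP_same h.
- by rewrite eP_diff.
- by rewrite eP_diff 1?eq_sym // eGsym.
Qed.

Lemma PD_layer (s : P) i (a b : T i) : tag s != i ->
  dist eP s (Tagged T a) = dist eP s (Tagged T b).
Proof.
move=> ns. apply: (@dist_module _ _ (fun z : P => tag z == i)) => //=.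
move=> z w v nz /eqP tw /eqP tv. rewrite (eP_tag (x:=z)) ?tw // => h.
by rewrite eP_tag ?tv // -tw.
Qed.

Definition twin i j := closed_nbhd eG i == closed_nbhd eG j.

Lemma twin_adj k i j : twin i j -> k != i -> k != j -> eG k i = eG k j.
Proof.
move=> /eqP tw ki kj. have := f_equal (fun A : {set 'I_n} => k \in A) tw.
by rewrite /closed_nbhd !inE (negbTE ki) (negbTE kj) /= !(eGsym _ k).
Qed.

Lemma twin_edge i j : twin i j -> i != j -> eG i j.
Proof.
move=> /eqP tw ne. have : j \in closed_nbhd eG j by rewrite !inE eqxx.
by rewrite -tw !inE eq_sym (negbTE ne) eGsym.
Qed.

Lemma PD_twin (s : P) i j (a : T i) (b : T j) : twin i j -> tag s != i -> tag s != j ->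
  dist eP s (Tagged T a) = dist eP s (Tagged T b).
Proof.
move=> tw ni nj. apply: (@dist_module _ _ (fun z : P => (tag z == i) || (tag z == j))) => //=.
- by rewrite negb_or ni nj.
- by rewrite eqxx.
- by rewrite eqxx orbT.
move=> z w v; rewrite negb_or => /andP[zi zj] hw hv.
have zw : tag z != tag w by case/orP: hw => /eqP ->.
have zv : tag z != tag v by case/orP: hv => /eqP ->.
rewrite eP_tag // eP_tag //.
have -> : eG (tag z) (tag w) = eG (tag z) i by case/orP: hw => /eqP -> //; rewrite (twin_adj tw).
by case/orP: hv => /eqP -> //; rewrite (twin_adj tw).
Qed.

Definition slice (S : {set P}) i : {set T i} := [set a | Tagged T a \in S].
Definition domb i (B : {set T i}) := [exists v, B \subset open_nbhd (E i) v].

Lemma key_nec (S : {set P}) : local_resolving eP (dist eP) S ->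
  (forall i, local_resolving (E i) (dist2 (E i)) (slice S i)) /\
  (forall i j, i != j -> twin i j -> ~~ (domb (slice S i) && domb (slice S j))).
Proof.
move=> hS; split.
  move=> i; apply/forallP => a; apply/forallP => b; apply/implyP => hab.
  have := implyP (forallP (forallP hS (Tagged T a)) (Tagged T b)).
  rewrite eP_same => /(_ hab) /existsP [[k c] /andP [sS hs]].
  case: (eqVneq k i) => [ki|ki].
    subst k. apply/existsP; exists c; rewrite inE sS /=.
    by move: hs; rewrite !PD_same; apply: contra => /eqP ->.
  by rewrite (PD_layer a b (s := Tagged T c)) ?eqxx in hs.
move=> i j ne tw; apply/negP => /andP [/existsP [va ha] /existsP [vb hb]].
have := implyP (forallP (forallP hS (Tagged T va)) (Tagged T vb)).
rewrite eP_diff // (twin_edge tw ne) => /(_ isT) /existsP [[k c] /andP [sS hs]].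
case: (eqVneq k i) => [ki|ki].
  subst k. have cn : c \in open_nbhd (E i) va by apply: (subsetP ha); rewrite inE.
  rewrite inE in cn.
  move: hs; rewrite PD_same (dist_edge eP_irr).
    rewrite dist2E // Esym cn; case: (eqVneq c va) => [ec|_]; last by rewrite eqxx.
    by rewrite ec Eirr in cn.
  by rewrite eP_diff // twin_edge.
case: (eqVneq k j) => [kj|kj].
  subst k. have cn : c \in open_nbhd (E j) vb by apply: (subsetP hb); rewrite inE.
  rewrite inE in cn.
  move: hs; rewrite PD_same (dist_edge eP_irr).
    rewrite dist2E // Esym cn; case: (eqVneq c vb) => [ec|_]; last by rewrite eqxx.
    by rewrite ec Eirr in cn.
  rewrite eP_diff 1?eq_sym // eGsym twin_edge //.
by rewrite (PD_twin va vb (s := Tagged T c)) ?eqxx in hs.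
Qed.


Lemma slice_nonempty (S : {set P}) k :
  local_resolving (E k) (dist2 (E k)) (slice S k) -> has_edge (E k) ->
  exists c, c \in slice S k.
Proof.
move=> /forallP h [x [y hxy]].
have /existsP [c /andP [cs _]] := implyP (forallP (h x) y) hxy. by exists c.
Qed.

Lemma key_suf (S : {set P}) :
  (forall i, has_edge (E i)) ->
  (forall i, local_resolving (E i) (dist2 (E i)) (slice S i)) ->
  (forall i j, i != j -> twin i j -> ~~ (domb (slice S i) && domb (slice S j))) ->
  local_resolving eP (dist eP) S.
Proof.
move=> hE hA hB.
apply/forallP => -[i a]; apply/forallP => -[j b]; apply/implyP => hxy.
case: (eqVneq i j) => [ij|ij].
  subst j. rewrite eP_same in hxy.
  have /existsP [c /andP [cs hc]] := implyP (forallP (forallP (hA i) a) b) hxy.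
  rewrite inE in cs. apply/existsP; exists (Tagged T c); rewrite cs !PD_same /=.
  by apply: contra hc => /eqP [->].
rewrite eP_diff // in hxy.
case: (boolP (twin i j)) => tw.
  have := hB i j ij tw. rewrite negb_and => /orP [ni|nj].
    move/existsPn: ni => /(_ a) /subsetPn [c cs cn].
    rewrite inE in cs; rewrite inE in cn.
    apply/existsP; exists (Tagged T c); rewrite cs /= PD_same (dist_edge eP_irr); last by rewrite eP_diff.
    rewrite dist2E // Esym (negbTE cn). by case: (c == a).
  move/existsPn: nj => /(_ b) /subsetPn [c cs cn].
  rewrite inE in cs; rewrite inE in cn.
  apply/existsP; exists (Tagged T c); rewrite cs /= PD_same (dist_edge eP_irr); last first.
    by rewrite eP_diff 1?eq_sym // eGsym.
  rewrite dist2E // Esym (negbTE cn) eq_sym. by case: (c == b).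
have [k hk] : exists k, (k \in closed_nbhd eG i) != (k \in closed_nbhd eG j).
  apply/existsP; move: tw; apply: contraR => /existsPn h; apply/eqP/setP => k.
  by move: (h k); rewrite negbK => /eqP.
have [c cs] := slice_nonempty (hA k) (hE k).
rewrite inE in cs.
apply/existsP; exists (Tagged T c); rewrite cs /=.
move: hk; rewrite /closed_nbhd !inE.
case: (eqVneq k i) => [ki|ki].
  subst k; by rewrite eGirr (negbTE ij) eGsym hxy.
case: (eqVneq k j) => [kj|kj].
  subst k; by rewrite eGirr hxy.
rewrite /= => hk.
case: (boolP (eG i k)) hk => hik /= hjk.
  rewrite (dist_edge eP_irr); last by rewrite eP_diff // eGsym.
  rewrite eq_sym; apply: dist_neq1. by rewrite eP_diff // eGsym.
rewrite (dist_edge eP_irr (x:= Tagged T c) (y := Tagged T b)); last by rewrite eP_diff // eGsym; case: (eG j k) hjk.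
apply: dist_neq1. by rewrite eP_diff // eGsym.
Qed.


Lemma card_slices (S : {set P}) : #|S| = \sum_(i < n) #|slice S i|.
Proof.
rewrite -sum1_card (partition_big (fun x : P => tag x) predT) //=.
apply: eq_bigr => i _. rewrite sum1dep_card.
have inj : injective (fun a : T i => Tagged T a) by move=> x y; exact: Tagged_inj.
have -> : [set x | (x \in S) && (tag x == i)] = (fun a : T i => Tagged T a) @: slice S i.
  apply/setP => -[k c]; rewrite inE /=. case: (eqVneq k i) => [ki|ki].
    subst k. by rewrite mem_imset // andbT inE.
  rewrite andbF; apply/esym/negbTE/imsetP => -[a _ h]. have := f_equal tag h.
  by move=> /= /eqP; rewrite (negbTE ki).
by rewrite card_imset.
Qed.

Lemma adim_spec i :
  (exists B, local_resolving (E i) (dist2 (E i)) B /\ #|B| = adim_l (E i)) /\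
  (forall B, local_resolving (E i) (dist2 (E i)) B -> adim_l (E i) <= #|B|).
Proof. apply: min_spec; exact: dist2_resolvingT. Qed.

Lemma extra i (B : {set T i}) v : local_resolving (E i) (dist2 (E i)) B ->
  B \subset open_nbhd (E i) v -> ~~ domb (v |: B).
Proof.
move=> hB sB; apply/existsP => -[w hw].
have vw : E i w v by have := subsetP hw v; rewrite !inE eqxx => /(_ isT).
have sBw : B \subset open_nbhd (E i) w by apply: subset_trans hw; apply: subsetUr.
have /existsP [c /andP [cB hc]] := implyP (forallP (forallP hB v) w) ltac:(by rewrite Esym).
have cv := subsetP sB c cB; have cw := subsetP sBw c cB. rewrite inE in cv; rewrite inE in cw.
move: hc; rewrite !dist2E // (Esym c v) cv (Esym c w) cw.
have -> : (c == v) = false by apply/negbTE; apply: contraTneq cv => ->; rewrite Eirr.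
have -> : (c == w) = false by apply/negbTE; apply: contraTneq cw => ->; rewrite Eirr.
by [].
Qed.

Variable I : {set 'I_n}.
Hypothesis hI : forall i, i \in I <-> in_classG (E i).
Hypothesis hE : forall i, has_edge (E i).

Local Notation X := (Xs eG I).

Definition goodB i (B : {set T i}) := [&& local_resolving (E i) (dist2 (E i)) B,
  #|B| == adim_l (E i) + (i \in X) & ((i \in I) && (i \notin X)) || ~~ domb B].

Lemma good_exists i : exists B : {set T i}, goodB B.
Proof.
have [[B0 [hB0 cB0]] _] := adim_spec i.
have XI : (i \in X) -> i \in I by rewrite inE => /andP[].
case: (boolP (i \in I)) => iI.
  have [v hv] := (proj1 (hI i) iI) B0 ltac:(by rewrite /local_adjacency_basis hB0 cB0 eqxx).
  case: (boolP (i \in X)) => iX.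
    exists (v |: B0); rewrite /goodB (resolving_sub hB0 (subsetUr _ _)) /= (extra hB0 hv) orbT andbT.
    rewrite cardsU1 cB0 addnC. 
    have -> : v \notin B0 by apply/negP => /(subsetP hv); rewrite inE Eirr.
    by rewrite iX.
  by exists B0; rewrite /goodB hB0 cB0 (negbTE iX) iI /= addn0 eqxx.
have iX : i \notin X by apply: contra iI.
case: (boolP [exists B, local_adjacency_basis (E i) B && ~~ domb B]).
  move=> /existsP [B /andP [/andP [hB /eqP cB] nd]].
  by exists B; rewrite /goodB hB cB (negbTE iX) /= addn0 eqxx nd orbT.
move=> /existsPn h. exfalso; move/negP: iI; apply; apply/hI => B hB.
have := h B; rewrite hB /= negbK => /existsP [v hv]. by exists v.
Qed.

Definition Bsel i : {set T i} := odflt set0 [pick B | goodB B].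

Lemma Bsel_good i : goodB (Bsel i).
Proof.
rewrite /Bsel; case: pickP => [B hB //|h].
have [B hB] := good_exists i. by rewrite h in hB.
Qed.

Definition S0 : {set P} := [set x | tagged x \in Bsel (tag x)].

Lemma slice_S0 i : slice S0 i = Bsel i.
Proof. by apply/setP => a; rewrite !inE. Qed.

Lemma twin_tc i j : twin i j -> twin_class eG i = twin_class eG j.
Proof. by move=> /eqP tw; apply/setP => y; rewrite !inE tw. Qed.

Lemma S0_res : local_resolving eP (dist eP) S0.
Proof.
apply: key_suf => // [i|i j ij tw]; rewrite !slice_S0.
  by case/and3P: (Bsel_good i).
case/and3P: (Bsel_good i) => _ _ /orP [/andP [iI iX] | /negbTE ->] //.
case/and3P: (Bsel_good j) => _ _ /orP [/andP [jI jX] | /negbTE ->]; last by rewrite andbF.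
move: iX jX; rewrite !inE iI jI /= !negbK (twin_tc tw) => /eqP -> /eqP [ji].
by rewrite ji eqxx in ij.
Qed.

Lemma S0_card : #|S0| = \sum_(i < n) adim_l (E i) + #|X|.
Proof.
rewrite card_slices -sum_nat_set -big_split /=; apply: eq_bigr => i _.
rewrite slice_S0. by case/and3P: (Bsel_good i) => _ /eqP.
Qed.

Lemma lower (S : {set P}) : local_resolving eP (dist eP) S ->
  \sum_(i < n) adim_l (E i) + #|X| <= #|S|.
Proof.
move=> hS; have [hA hB] := key_nec hS.
set ND := [set i in I | ~~ domb (slice S i)].
have h1 : \sum_(i < n) adim_l (E i) + #|ND| <= #|S|.
  rewrite card_slices -sum_nat_set -big_split /=; apply: leq_sum => i _.
  have [_ lo] := adim_spec i. have := lo _ (hA i).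
  case: (boolP (i \in ND)) => iN; last by rewrite addn0.
  rewrite addn1 leq_eqVlt => /orP [/eqP ea|//]. exfalso.
  move: iN; rewrite inE => /andP [iI nd].
  have [v hv] := (proj1 (hI i) iI) (slice S i) ltac:(by rewrite /local_adjacency_basis hA ea eqxx).
  by move/existsP: nd; apply; exists v.
apply: leq_trans h1; rewrite leq_add2l.
rewrite sum_X (twin_part eG ND); apply: leq_sum => U hU.
case: (boolP (I :&: U \subset ND)) => sub.
  apply: leq_trans (leq_subr _ _) _; apply: subset_leq_card.
  by rewrite subsetI sub subsetIr.
move/subsetPn: sub => [d dIU dN].
rewrite (cardsD1 d) dIU add1n subn1 /=. apply: subset_leq_card.
apply/subsetP => i; rewrite !inE => /and3P [id iI iU].
rewrite iU andbT iI /=.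
move: dIU dN; rewrite !inE => /andP [dI dU]; rewrite dI /= negbK => dd.
have tw : twin i d.
  case/imsetP: hU => x _ ex. move: iU dU; rewrite ex !inE /twin => /eqP -> /eqP ->; by [].
have := hB i d id tw. by rewrite dd andbT.
Qed.


Lemma final_sec : dim_l eP = \sum_(i < n) adim_l (E i) + #|X|.
Proof.
apply: min_eq; last exact: lower.
exists S0; split; [exact: S0_res | exact: S0_card].
Qed.

End Prod.


Unset Implicit Arguments.

Theorem mainTheorem2 (n : nat) (eG : rel 'I_n)
  (T : 'I_n -> finType) (E : forall i, rel (T i)) :
  2 <= n ->
  simple_graph eG ->
  (forall x y : 'I_n, connect eG x y) ->
  (forall i, simple_graph (E i)) ->
  (forall i, has_edge (E i)) ->
  forall I : {set 'I_n},
  (forall i, i \in I <-> in_classG (E i)) ->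
  dim_l (lex_rel eG E) =
    \sum_(i < n) adim_l (E i)
    + \sum_(U in nonsingleton_twin_classes eG | I :&: U != set0) (#|I :&: U| - 1).
Proof.
move=> n2 [eGsym eGirr] conn hsE hE I hI.
have Esym : forall i, symmetric (E i) by move=> i; case: (hsE i).
have Eirr : forall i, irreflexive (E i) by move=> i; case: (hsE i).
have nbr : forall i : 'I_n, exists k, eG i k.
  move=> i.
  have [j ij] : exists j : 'I_n, j != i.
    have n0 : 0 < n by apply: leq_trans n2.
    pose a := Ordinal n0; pose b := Ordinal n2.
    case: (eqVneq a i) => [ai|ai]; last by exists a.
    exists b; rewrite -ai; by apply/eqP => /(f_equal val).
  case/connectP: (conn i j) => p; case: p => [/= _ ji|k p /= /andP [h _] _]; last by exists k.
  by rewrite ji eqxx in ij.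
have inh : forall i, exists _ : T i, true by move=> i; case: (hE i) => x _; exists x.
rewrite (final_sec eGirr eGsym Eirr Esym nbr inh hI hE) rhs_eq sum_X //.
Qed.
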